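(* Let $m\ge1$, let $p$ be a prime, and let $\lambda\vdash n$ be a partition with $2$-core of size $\binom{m+1}{2}$. If $w_p(\lambda)=t\le\lfloor\frac{m+1}{2}\rfloor$, then $n\ge N_t:=tp-t(2(m-t)+1)+\binom{m+1}{2}$.
   Context: Partitions $\lambda=(\lambda_1\ge\dots\ge\lambda_r\ge0)$ may have zero parts; the degree sequence is $n_\lambda=(\lambda_r,\lambda_{r-1}+1,\dots,\lambda_1+r-1)$. For an integer $q\ge1$, removing a $q$-hook from $\lambda$ means replacing an entry $a$ of $n_\lambda$ by $a-q$, where $a-q\ge0$ and $a-q\notin n_\lambda$, and taking the partition of the same length with the resulting degree sequence (equivalently removing a connected border strip of $q$ cells from the Young diagram). The $q$-weight $w_q(\lambda)$ is the maximal number of $q$-hooks that can be removed successively. Removing $2$-hooks until impossible yields the $2$-core, which is a staircase $(m,m-1,\dots,1)$ padded with zeros, of size $\binom{m+1}{2}$. *)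

(* Defs.v *)
From mathcomp Require Import all_boot all_order all_algebra.
Set Implicit Arguments. Unset Strict Implicit. Unset Printing Implicit Defensive.

Definition is_partition (la : seq nat) : bool := sorted geq la.

Definition psize (la : seq nat) : nat := sumn la.

(* Listed as a sequence; its order is
   irrelevant below (only used up to permutation). *)
Definition degseq (la : seq nat) : seq nat :=
  [seq nth 0 la i + (size la).-1 - i | i <- iota 0 (size la)].

Definition remove_hook (q : nat) (la la' : seq nat) : Prop :=
  exists a, [/\ a \in degseq la, q <= a, (a - q) \notin degseq la &
    is_partition la'] /\ size la' = size la /\
    perm_eq (degseq la')
      [seq (if x == a then a - q else x) | x <- degseq la].

Fixpoint can_remove (q k : nat) (la : seq nat) : Prop :=
  match k with
  | 0 => True
  | k'.+1 => exists la', remove_hook q la la' /\ can_remove q k' la'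
  end.

Definition qweight_is (q : nat) (la : seq nat) (t : nat) : Prop :=
  can_remove q t la /\ ~ can_remove q t.+1 la.

Inductive reach (q : nat) : seq nat -> seq nat -> Prop :=
  | reach_refl la : reach q la la
  | reach_step la la' la'' : remove_hook q la la' -> reach q la' la'' ->
      reach q la la''.

Definition two_core_size (la : seq nat) (s : nat) : Prop :=
  exists c, [/\ reach 2 la c, ~ (exists c', remove_hook 2 c c') & psize c = s].

(* Main.v *)
Require Import Defs.
From mathcomp Require Import all_boot all_order all_algebra.
From mathcomp Require Import zify.

Definition maxs (s : seq nat) := foldr maxn 0 s.

Lemma maxs_ge s y : y \in s -> y <= maxs s.
Proof.
elim: s => //= x s IH; rewrite in_cons => /orP[/eqP->|/IH H].
  by rewrite leq_maxl.
by rewrite (leq_trans H) // leq_maxr.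
Qed.

Lemma maxs_in s : s != [::] -> maxs s \in s.
Proof.
elim: s => //= x s IH _; rewrite in_cons.
case: s IH => [|y s] IH /=; first by rewrite maxn0 eqxx.
have /IH H : y :: s != [::] by [].
rewrite /maxs /= in H *.
case: (leqP x (maxn y (foldr maxn 0 s))) => Hx.
  by rewrite H orbT.
by rewrite eqxx.
Qed.

Lemma uniq_size_max s : uniq s -> size s <= (maxs s).+1.
Proof.
move=> U; rewrite -(size_iota 0 (maxs s).+1); apply: uniq_leq_size => // y Hy.
by rewrite mem_iota /= add0n ltnS maxs_ge.
Qed.

Lemma sumn_iota0 n : sumn (iota 0 n) = 'C(n, 2).
Proof. by rewrite sumnE -bin2_sum /index_iota subn0. Qed.

Lemma L1 n : forall Y : seq nat, size Y = n -> uniq Y -> 'C(n, 2) <= sumn Y.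
Proof.
elim: n => [|n IH] Y Hs U; first by rewrite bin0n.
have Hne : Y != [::] by move: Hs; case: (Y).
have Hin := @maxs_in Y Hne.
have P := perm_to_rem Hin.
have Hs' : size (rem (maxs Y) Y) = n by rewrite size_rem // Hs.
have := IH _ Hs' (@rem_uniq _ (maxs Y) Y U).
have := @uniq_size_max Y U.
rewrite (perm_sumn P) /= binS bin1 Hs => H1 H2.
by rewrite addnC leq_add.
Qed.

Lemma L2 (Y : seq nat) : uniq Y -> (forall y, y \in Y -> 0 < y -> y.-1 \in Y) ->
  sumn Y = 'C(size Y, 2).
Proof.
move=> U C.
have down : forall y, y \in Y -> forall k, k <= y -> k \in Y.
  move=> y Hy k; elim: y Hy => [|y IH] Hy Hk.
    by move: Hk; rewrite leqn0 => /eqP->.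
  case: (ltnP k y.+1) => Hk'.
    by apply: IH => //; apply: (C y.+1).
  by have -> : k = y.+1 by apply/eqP; rewrite eqn_leq Hk.
have sub : {subset Y <= iota 0 (size Y)}.
  move=> y Hy; rewrite mem_iota /= add0n.
  have : {subset iota 0 y.+1 <= Y}.
    by move=> k; rewrite mem_iota /= add0n ltnS; apply: down.
  by move/(uniq_leq_size (iota_uniq 0 y.+1)); rewrite size_iota.
have [_ E] := uniq_min_size U sub (eq_leq (size_iota _ _)).
rewrite (perm_sumn (uniq_perm U (iota_uniq _ _) E)).
by rewrite sumn_iota0.
Qed.

Lemma bin2_dbl n : 2 * 'C(n, 2) = n * n.-1.
Proof. elim: n => [|n IH] //; rewrite binS bin1 mulnDr IH; case: n {IH} => //= n; lia. Qed.

Lemma sumn_split (b : bool) (X : seq nat) :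
  sumn X = sumn (filter (fun x => odd x == b) X) + sumn (filter (fun x => odd x != b) X).
Proof. elim: X => //= x X ->; case: (odd x == b) => /=; lia. Qed.

Lemma sumn_half (b : bool) (s : seq nat) : all (fun x => odd x == b) s ->
  sumn s = 2 * sumn (map half s) + b * size s.
Proof.
elim: s => [|x s IH] /=; first by lia.
move=> /andP[/eqP Hx /IH ->].
have := odd_double_half x; rewrite Hx -mul2n; case: b {IH} Hx => /= _; lia.
Qed.

Lemma uniq_half (b : bool) (s : seq nat) : all (fun x => odd x == b) s -> uniq s ->
  uniq (map half s).
Proof.
move=> /allP A U; rewrite map_inj_in_uniq // => x y Hx Hy Hxy.
rewrite -(odd_double_half x) -(odd_double_half y) Hxy.
by rewrite (eqP (A x Hx)) (eqP (A y Hy)).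
Qed.

Definition closed2 (X : seq nat) := forall x, x \in X -> 2 <= x -> x - 2 \in X.

Lemma closed_half (b : bool) (X : seq nat) : closed2 X ->
  let Y := map half (filter (fun x => odd x == b) X) in
  forall y, y \in Y -> 0 < y -> y.-1 \in Y.
Proof.
move=> C Y y /mapP[x]; rewrite mem_filter => /andP[/eqP Hb Hx] -> Hy.
have Ex := odd_double_half x; rewrite Hb in Ex.
have H2 : 2 <= x by move: Hy Ex; rewrite -mul2n; lia.
apply/mapP; exists (x - 2).
  by rewrite mem_filter C // andbT oddB // Hb /= addbF.
rewrite -[in RHS]Ex.
have -> : b + x./2.*2 - 2 = b + (x./2.-1).*2 by move: Hy; rewrite -!mul2n; lia.
by rewrite half_bit_double.
Qed.

Definition ecount (X : seq nat) := count (fun x => ~~ odd x) X.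
Definition ocount (X : seq nat) := count odd X.

Lemma sum_par (X : seq nat) : uniq X ->
  ecount X * (ecount X).-1 + ocount X * ocount X <= sumn X.
Proof.
move=> U; rewrite (sumn_split false X).
have A0 : all (fun x => odd x == false) (filter (fun x => odd x == false) X).
  by apply/allP => x; rewrite mem_filter => /andP[].
have A1 : all (fun x => odd x == true) (filter (fun x => odd x != false) X).
  by apply/allP => x; rewrite mem_filter => /andP[]; case: (odd x).
rewrite (@sumn_half false _ A0) (@sumn_half true _ A1).
have L0 := @L1 _ _ (size_map half _) (@uniq_half false _ A0 (filter_uniq _ U)).
have L1' := @L1 _ _ (size_map half _) (@uniq_half true _ A1 (filter_uniq _ U)).
have E0 : size (filter (fun x => odd x == false) X) = ecount X.
  by rewrite size_filter /ecount; apply: eq_count => x; case: (odd x).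
have E1 : size (filter (fun x => odd x != false) X) = ocount X.
  by rewrite size_filter /ocount; apply: eq_count => x; case: (odd x).
rewrite E0 in L0; rewrite E1 in L1' *.
have := bin2_dbl (ecount X); have := bin2_dbl (ocount X).
case: (ocount X) L1' => [|o]; case: (ecount X) L0 => [|e] /=; nia.
Qed.

Lemma sum_par_eq (X : seq nat) : uniq X -> closed2 X ->
  sumn X = ecount X * (ecount X).-1 + ocount X * ocount X.
Proof.
move=> U C; rewrite (sumn_split false X).
have A0 : all (fun x => odd x == false) (filter (fun x => odd x == false) X).
  by apply/allP => x; rewrite mem_filter => /andP[].
have A1 : all (fun x => odd x == true) (filter (fun x => odd x != false) X).
  by apply/allP => x; rewrite mem_filter => /andP[]; case: (odd x).
rewrite (@sumn_half false _ A0) (@sumn_half true _ A1).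
have L0 := @L2 _ (@uniq_half false _ A0 (filter_uniq _ U)) (@closed_half false X C).
have F : filter (fun x => odd x != false) X = filter (fun x => odd x == true) X.
  by apply: eq_filter => x; case: (odd x).
have L1' := @L2 _ (@uniq_half true _ A1 (filter_uniq _ U)).
rewrite F in L1' A1 *.
have {}L1' := L1' (@closed_half true X C).
rewrite L0 L1' !size_map.
have E0 : size (filter (fun x => odd x == false) X) = ecount X.
  by rewrite size_filter /ecount; apply: eq_count => x; case: (odd x).
have E1 : size (filter (fun x => odd x == true) X) = ocount X.
  by rewrite size_filter /ocount; apply: eq_count => x; case: (odd x).
rewrite E0 E1.
have := bin2_dbl (ecount X); have := bin2_dbl (ocount X).
case: (ocount X) => [|o]; case: (ecount X) => [|e] /=; nia.
Qed.

Lemma size_degseq la : size (degseq la) = size la.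
Proof. by rewrite /degseq size_map size_iota. Qed.

Lemma degseq_cons x la : degseq (x :: la) = (x + size la) :: degseq la.
Proof.
rewrite /degseq /= subn0; congr (_ :: _).
rewrite -(addn0 1) iotaDl -map_comp; apply/eq_in_map => j.
rewrite mem_iota /= add0n => Hj /=.
case: (size la) Hj => // r Hj /=; rewrite add0n; lia.
Qed.

Lemma sumn_degseq la : sumn (degseq la) = psize la + 'C(size la, 2).
Proof.
elim: la => [|x la IH]; first by [].
rewrite degseq_cons /= IH binS bin1 /psize /=; lia.
Qed.

Lemma degseq_bound la : is_partition la ->
  forall y, y \in degseq la -> y < head 0 la + size la.
Proof.
elim: la => [|x la IH] //= P y.
rewrite degseq_cons in_cons => /orP[/eqP->|Hy]; first by lia.
case: la IH P Hy => [|z la] IH P Hy; first by [].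
move: P; rewrite /is_partition /= => /andP[Hzx P].
have := IH P y Hy; rewrite /=; lia.
Qed.

Lemma degseq_uniq la : is_partition la -> uniq (degseq la).
Proof.
elim: la => [|x la IH] // P.
have P' : is_partition la by move: P; rewrite /is_partition /= => /path_sorted.
rewrite degseq_cons /= IH // andbT; apply/negP => Hin.
have := @degseq_bound la P' _ Hin.
case: la {IH} P P' Hin => [|z la] P P' Hin; first by [].
move: P; rewrite /is_partition /= => /andP[Hzx _] /=; lia.
Qed.

Lemma exists_part n : forall Y : seq nat, size Y = n -> uniq Y ->
  exists la, [/\ is_partition la, size la = n & perm_eq (degseq la) Y].
Proof.
elim: n => [|n IH] Y Hs U.
  by exists [::]; move: Hs U; case: (Y) => // _ _; split.
have Hne : Y != [::] by move: Hs; case: (Y).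
have Hin := @maxs_in Y Hne.
have P := perm_to_rem Hin.
have Hs' : size (rem (maxs Y) Y) = n by rewrite size_rem // Hs.
have [la [Pla Sla Qla]] := IH _ Hs' (@rem_uniq _ (maxs Y) Y U).
have Hmax := @uniq_size_max Y U; rewrite Hs in Hmax.
exists ((maxs Y - n) :: la); split => //=.
- case: la Pla Sla Qla => [|z la] Pla Sla Qla //.
  rewrite /is_partition /= in Pla *; rewrite Pla andbT.
  have Hz : z + size la \in rem (maxs Y) Y.
    by rewrite -(perm_mem Qla) degseq_cons in_cons eqxx.
  have Hle := @maxs_ge Y _ (mem_rem Hz).
  have Hne' : z + size la != maxs Y.
    by apply/eqP => E; move: Hz; rewrite E mem_rem_uniqF.
  move: Sla => /= Sla; lia.
- by rewrite Sla.
- rewrite degseq_cons Sla subnK; last by lia.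
  by rewrite perm_sym (perm_trans P) // perm_cons perm_sym.
Qed.

Definition repl (a q : nat) (X : seq nat) :=
  [seq (if x == a then a - q else x) | x <- X].

Lemma repl_perm a q X : uniq X -> a \in X ->
  perm_eq (repl a q X) ((a - q) :: rem a X).
Proof.
move=> U Ha; rewrite /repl.
rewrite (perm_trans (perm_map _ (perm_to_rem Ha))) //= eqxx perm_cons.
rewrite -[X in perm_eq _ X]map_id; apply/permP => P; congr count.
apply/eq_in_map => x Hx; case: eqP => // E.
by move: Hx; rewrite E mem_rem_uniqF.
Qed.

Lemma hook_step q la la' : is_partition la -> remove_hook q la la' ->
 [/\ is_partition la', size la' = size la, psize la' + q = psize la &
     [/\ ecount (degseq la') <= ecount (degseq la) + 1,
     ecount (degseq la) <= ecount (degseq la') + 1 &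
     (~~ odd q -> ecount (degseq la') = ecount (degseq la))]].
Proof.
move=> P [a [[Ha Hq Hn P'] [Hs Q]]].
have U := @degseq_uniq _ P.
have Q' : perm_eq (degseq la') ((a - q) :: rem a (degseq la)).
  exact: perm_trans Q (@repl_perm a q _ U Ha).
have Q0 := perm_to_rem Ha.
have S1 := perm_sumn Q'; have S2 := perm_sumn Q0.
rewrite !sumn_degseq Hs /= in S1 S2.
have C1 : ecount (degseq la') = ~~ odd (a - q) + ecount (rem a (degseq la)).
  by rewrite /ecount (permP Q').
have C2 : ecount (degseq la) = ~~ odd a + ecount (rem a (degseq la)).
  by rewrite /ecount {1}(permP Q0).
split => //; first by lia.
split.
- by rewrite C1 C2; case: (odd _); case: (odd _) => /=; lia.
- by rewrite C1 C2; case: (odd _); case: (odd _) => /=; lia.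
- by move=> Hq'; rewrite C1 C2 oddB // (negbTE Hq') addbF.
Qed.

Lemma chain p t : forall la, is_partition la -> can_remove p t la ->
  exists mu, [/\ is_partition mu, size mu = size la, psize mu + t * p = psize la,
     ecount (degseq mu) <= ecount (degseq la) + t &
     ecount (degseq la) <= ecount (degseq mu) + t].
Proof.
elim: t => [|t IH] la P /=.
  by move=> _; exists la; split => //; rewrite ?mul0n ?addn0.
move=> [la' [R C]].
have [P' S' Z' [E1 E2 _]] := @hook_step _ _ _ P R.
have [mu [Pm Sm Zm F1 F2]] := IH _ P' C.
exists mu; split => //; first by rewrite Sm.
- by rewrite mulSn; lia.
- by lia.
- by lia.
Qed.

Lemma reach2 la c : reach 2 la c -> is_partition la ->
  [/\ is_partition c, size c = size la & ecount (degseq c) = ecount (degseq la)].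
Proof.
elim => [l|l l' l'' R _ IH] P //.
have [P' S' _ [_ _ E]] := @hook_step _ _ _ P R.
have [Pc Sc Ec] := IH P'.
by split => //; rewrite ?Sc ?S' // Ec E.
Qed.

Lemma core_closed c : is_partition c -> ~ (exists c', remove_hook 2 c c') ->
  closed2 (degseq c).
Proof.
move=> P N x Hx H2; apply/negPn/negP => Hn; apply: N.
have U := @degseq_uniq _ P.
have Q := @repl_perm x 2 _ U Hx.
have U' : uniq (repl x 2 (degseq c)).
  rewrite (perm_uniq Q) /= rem_uniq // andbT.
  by apply/negP => /mem_rem; apply/negP.
have Hsz : size (repl x 2 (degseq c)) = size (degseq c) by rewrite size_map.
have [la [Pl Sl Ql]] := @exists_part _ _ Hsz U'.
exists la; exists x; split; first by split.
by rewrite Sl size_degseq.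
Qed.

From Stdlib Require Import ZArith Lia.
Module AZ.
Local Open Scope Z_scope.
Lemma arithZ (m t e o e' o' pm : Z) :
  0 <= m -> 0 <= t -> 
  e + o = e' + o' -> e' <= e + t -> e <= e' + t -> 2 * t <= m + 1 ->
  2 * (e * (e - 1) + o * o) = (m + 1) * m + (e + o) * (e + o - 1) ->
  2 * (e' * (e' - 1) + o' * o') <= 2 * pm + (e + o) * (e + o - 1) ->
  (m + 1) * m <= 2 * pm + 2 * t * (2 * (m - t) + 1).
Proof.
intros Hm Ht Hr H1 H2 Htm Hc Hmu.
set (D := e - o). set (D' := e' - o').
assert (E1 : 2 * (e * (e - 1) + o * o) - (e + o) * (e + o - 1) = D * (D - 1)) by (unfold D; ring).
assert (E2 : 2 * (e' * (e' - 1) + o' * o') - (e + o) * (e + o - 1) = D' * (D' - 1)) by (unfold D'; rewrite Hr; ring).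
assert (HD : (D - m - 1) * (D + m) = 0).
{ replace ((D - m - 1) * (D + m)) with (D * (D - 1) - (m + 1) * m) by ring. lia. }
assert (HD' : D' * (D' - 1) <= 2 * pm) by lia.
assert (Hd : D - 2 * t <= D' <= D + 2 * t) by (unfold D, D'; lia).
apply Z.mul_eq_0 in HD; destruct HD as [HD|HD].
- set (k := m + 1 - 2 * t).
  assert (Ek : (m + 1) * m - 2 * t * (2 * (m - t) + 1) = k * (k - 1)) by (unfold k; ring).
  assert (Hk : D' * (D' - 1) - k * (k - 1) = (D' - k) * (D' + k - 1)) by ring.
  assert (0 <= (D' - k) * (D' + k - 1)).
  { destruct (Z_le_gt_dec 0 (D' + k - 1)).
    - apply Z.mul_nonneg_nonneg; unfold k in *; lia.
    - assert (D' - k = 0) by (unfold k in *; lia). rewrite H; lia. }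
  lia.
- set (k := 2 * t - m).
  assert (Ek : (m + 1) * m - 2 * t * (2 * (m - t) + 1) = k * (k - 1)) by (unfold k; ring).
  assert (Hk : D' * (D' - 1) - k * (k - 1) = (k - D') * (1 - k - D')) by ring.
  assert (0 <= (k - D') * (1 - k - D')).
  { destruct (Z_le_gt_dec 0 (1 - k - D')).
    - apply Z.mul_nonneg_nonneg; unfold k in *; lia.
    - assert (k - D' = 0) by (unfold k in *; lia). rewrite H; lia. }
  lia.
Qed.
End AZ.

Lemma ec_oc X : ecount X + ocount X = size X.
Proof. elim: X => //= x X; rewrite /ecount /ocount /= => <-; case: (odd x) => /=; lia. Qed.

Lemma predn_mul n : n * n.-1 + n = n * n.
Proof. case: n => //= n; rewrite mulnS; lia. Qed.

Import Order.TTheory GRing.Theory Num.Theory.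

Theorem mainTheorem9 (m p n t : nat) (la : seq nat) :
  1 <= m -> prime p ->
  is_partition la -> psize la = n ->
  two_core_size la 'C(m.+1, 2) ->
  qweight_is p la t -> t <= m.+1./2 ->
  ((t * p)%:Z - (t * (2 * (m - t) + 1))%:Z + ('C(m.+1, 2))%:Z <= n%:Z)%R.
Proof.
move=> Hm _ P Hn [c [Rc Nc Sc]] [Ct _] Ht.
have [Pc Szc Ec] := @reach2 _ _ Rc P.
have Cl := @core_closed c Pc Nc.
have Eq := @sum_par_eq _ (@degseq_uniq _ Pc) Cl.
rewrite sumn_degseq Sc in Eq.
have [mu [Pm Sm Zm F1 F2]] := @chain p t _ P Ct.
have Ineq := @sum_par _ (@degseq_uniq _ Pm); rewrite sumn_degseq in Ineq.
have R1 := ec_oc (degseq c); have R2 := ec_oc (degseq mu).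
rewrite size_degseq Szc in R1; rewrite size_degseq Sm in R2.
rewrite Szc in Eq; rewrite Sm in Ineq.
have B1 := bin2_dbl m.+1; have B2 := bin2_dbl (size la).
have Q1 := predn_mul (ecount (degseq c)); have Q2 := predn_mul (ecount (degseq mu)).
have Q3 := predn_mul (size la).
have Ht2 : 2 * t <= m + 1 by move: Ht; rewrite -(odd_double_half m.+1) -mul2n; case: (odd _) => /=; lia.
have Ht' : t <= m by lia.
move: Hm Ht2 B1 Eq Sc; have [d ->] : exists d, m = t + d by exists (m - t); lia.
rewrite addKn => Hm Ht2 B1 Eq Sc.
have K : (t + d + 1) * (t + d) <= 2 * psize mu + 2 * t * (2 * d + 1).
  have := AZ.arithZ (Z.of_nat (t + d)) (Z.of_nat t)
    (Z.of_nat (ecount (degseq c))) (Z.of_nat (ocount (degseq c)))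
    (Z.of_nat (ecount (degseq mu))) (Z.of_nat (ocount (degseq mu)))
    (Z.of_nat (psize mu)).
  rewrite Ec in Q1 R1 Eq *.
  move=> H; have {}H := H ltac:(lia) ltac:(lia) ltac:(lia) ltac:(lia) ltac:(lia) ltac:(lia).
  have {}H := H ltac:(lia) ltac:(lia).
  lia.
lia.
Qed.
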